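(* Let $S$ be an inductive $E$-demigroup with associated function $\cdot:S\times E\to E$, and let $P=C^d_E(S)$. Then $P$ becomes a left restriction semigroup under $$(e,s)(f,t)=\big(e\wedge(s\cdot f),\,(e\wedge(s\cdot f))st\big),\qquad D((e,s))=(e,e),$$ for all $(e,s),(f,t)\in P$ (this is the induced left restriction semigroup of the inductive constellation $P$), and in it $(e,s)\le(f,t)$ in the natural order if and only if $e\le_r f$ and $s=et$.
   Context: For a semigroup $S$, $E(S)$ is its set of idempotents; for $e,f\in E(S)$, $e\le_r f$ iff $e=ef$. $E\subseteq E(S)$ is right pre-reduced if $e=ef$ and $f=fe$ imply $e=f$ for $e,f\in E$. A demigroup is a semigroup $S$ with unary $d$ such that $d(x)\in E(S)$, $d(x)x=x$, $d(xy)=d(xd(y))$ for all $x,y$. For $E\subseteq E(S)$, $S$ is an $E$-demigroup if $d(s)\in E$ for all $s$ and $ed(e)=e$ for all $e\in E$. It is inductive if $E$ is right pre-reduced, $(E,\le_r)$ is a meet-semilattice with meet $\wedge$, and there is a function $\cdot:S\times E\to E$ with (I1) for all $t\in S$, $e\in E$, $s\in S$: ($ste=st$ and $sd(t)=s$) iff $s(t\cdot e)=s$; (I2) for $s\in S$, $e,f\in E$: $se=sf=s$ implies $s(e\wedge f)=s$. $C^d_E(S)=\{(e,s)\in E\times S\mid es=s,\ d(e)=d(s)\}$; as a constellation its partial product is $(e,s)\circ(f,t)=(e,st)$, defined exactly when $sf=s$, and $D((e,s))=(e,e)$. A left restriction semigroup is a semigroup with unary operation $D$ satisfying $D(x)x=x$,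 $D(x)D(y)=D(y)D(x)$, $D(D(x)y)=D(x)D(y)$ and $xD(y)=D(xy)x$; its natural order is $s\le t$ iff $s=D(s)t$. *)

(* Defs.v *)
Set Implicit Arguments.

Section Defs.
Variable T : Type.
Variable mul : T -> T -> T.

Definition associative_op := forall x y z : T, mul x (mul y z) = mul (mul x y) z.

Definition idem (e : T) : Prop := mul e e = e.

Definition le_r (e f : T) : Prop := e = mul e f.

Definition sub_idem (E : T -> Prop) : Prop := forall e, E e -> idem e.

Definition right_pre_reduced (E : T -> Prop) : Prop :=
  forall e f, E e -> E f -> e = mul e f -> f = mul f e -> e = f.

Definition demigroup (d : T -> T) : Prop :=
  associative_op /\
  (forall x, idem (d x)) /\
  (forall x, mul (d x) x = x) /\
  (forall x y, d (mul x y) = d (mul x (d y))).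

Definition E_demigroup (d : T -> T) (E : T -> Prop) : Prop :=
  demigroup d /\ sub_idem E /\
  (forall s, E (d s)) /\
  (forall e, E e -> mul e (d e) = e).

Definition is_meet (E : T -> Prop) (meet : T -> T -> T) : Prop :=
  forall e f, E e -> E f ->
    E (meet e f) /\ le_r (meet e f) e /\ le_r (meet e f) f /\
    (forall g, E g -> le_r g e -> le_r g f -> le_r g (meet e f)).

Definition inductive_E_demigroup (d : T -> T) (E : T -> Prop)
    (meet : T -> T -> T) (dot : T -> T -> T) : Prop :=
  E_demigroup d E /\
  right_pre_reduced E /\
  is_meet E meet /\
  (forall s e, E e -> E (dot s e)) /\
  (forall t e s, E e ->
     ((mul (mul s t) e = mul s t /\ mul s (d t) = s) <-> mul s (dot t e) = s)) /\
  (forall s e f, E e -> E f -> mul s e = s -> mul s f = s ->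
     mul s (meet e f) = s).

Definition inC (d : T -> T) (E : T -> Prop) (p : T * T) : Prop :=
  E (fst p) /\ mul (fst p) (snd p) = snd p /\ d (fst p) = d (snd p).

Definition Pmul (meet : T -> T -> T) (dot : T -> T -> T) (p q : T * T) : T * T :=
  let g := meet (fst p) (dot (snd p) (fst q)) in
  (g, mul (mul g (snd p)) (snd q)).

Definition PD (p : T * T) : T * T := (fst p, fst p).

Definition left_restriction_on (U : Type) (P : U -> Prop)
    (m : U -> U -> U) (D : U -> U) : Prop :=
  (forall x y, P x -> P y -> P (m x y)) /\
  (forall x, P x -> P (D x)) /\
  (forall x y z, P x -> P y -> P z -> m x (m y z) = m (m x y) z) /\
  (forall x, P x -> m (D x) x = x) /\
  (forall x y, P x -> P y -> m (D x) (D y) = m (D y) (D x)) /\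
  (forall x y, P x -> P y -> D (m (D x) y) = m (D x) (D y)) /\
  (forall x y, P x -> P y -> m x (D y) = m (D (m x y)) x).

Definition nat_le (U : Type) (m : U -> U -> U) (D : U -> U) (x y : U) : Prop :=
  x = m (D x) y.

End Defs.

(* Main.v *)
Require Import Defs.
From Stdlib Require Import Setoid.

Theorem corollary3p8 (T : Type) (mul : T -> T -> T) (d : T -> T)
    (E : T -> Prop) (meet : T -> T -> T) (dot : T -> T -> T) :
  inductive_E_demigroup mul d E meet dot ->
  left_restriction_on (inC mul d E) (Pmul mul meet dot) (@PD T) /\
  (forall e s f t, inC mul d E (e, s) -> inC mul d E (f, t) ->
     (nat_le (Pmul mul meet dot) (@PD T) (e, s) (f, t) <->
      (le_r mul e f /\ s = mul e t))).
Proof.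
  intros H.
  destruct H as [[[Ha [Hdi [Hdl Hdd]]] [Hsub [HdE HEd]]] [Hprr [Hmeet [HdotE [HI1 HI2]]]]].
  unfold idem in Hdi. unfold sub_idem, idem in Hsub. unfold is_meet, le_r in Hmeet.
  unfold right_pre_reduced in Hprr.
  assert (trans : forall a b c, a = mul a b -> b = mul b c -> a = mul a c).
  { intros a b c H1 H2. rewrite H1 at 2. rewrite <- Ha, <- H2. exact H1. }
  assert (absorb : forall x a b, mul x a = x -> a = mul a b -> mul x b = x).
  { intros x a b H1 H2. rewrite <- H1 at 1. rewrite <- Ha, <- H2. exact H1. }
  assert (MEb : forall a b, E a -> E b -> E (meet a b)).
  { intros a b A B; apply (Hmeet a b A B). }
  assert (Mchar : forall a b p, E a -> E b -> E p ->
            (p = mul p (meet a b) <-> p = mul p a /\ p = mul p b)).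
  { intros a b p A B P; destruct (Hmeet a b A B) as [_ [H1 [H2 H3]]]; split.
    - intros Hp; split; eapply trans; eauto.
    - intros [H4 H5]; apply H3; auto. }
  assert (mle1 : forall a b, E a -> E b -> meet a b = mul (meet a b) a).
  { intros a b A B; apply (Hmeet a b A B). }
  assert (mle2 : forall a b, E a -> E b -> meet a b = mul (meet a b) b).
  { intros a b A B; apply (Hmeet a b A B). }
  assert (eqlb : forall a b, E a -> E b ->
            (forall p, E p -> (p = mul p a <-> p = mul p b)) -> a = b).
  { intros a b A B Hab. apply Hprr; auto.
    - apply (proj1 (Hab a A)). symmetry; apply Hsub; auto.
    - apply (proj2 (Hab b B)). symmetry; apply Hsub; auto. }
  assert (Dchar : forall s f p, E f ->
            (p = mul p (dot s f) <-> mul (mul p s) f = mul p s /\ mul p (d s) = p)).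
  { intros s f p F. split; intro Z.
    - apply (proj2 (HI1 s f p F)). symmetry; exact Z.
    - symmetry; apply (proj1 (HI1 s f p F)); exact Z. }
  assert (Gchar : forall e s f p, E e -> mul e s = s -> d e = d s -> E f -> E p ->
     (p = mul p (meet e (dot s f)) <-> p = mul p e /\ mul (mul p s) f = mul p s)).
  { intros e s f p He Hes Hdes F P.
    rewrite (Mchar e (dot s f) p He (HdotE s f F) P), (Dchar s f p F).
    split; [intros [H1 [H2 H3]]; split; auto | intros [H1 H2]; repeat split; auto].
    rewrite <- Hdes. rewrite H1 at 1. rewrite <- Ha, (HEd e He). symmetry; exact H1. }
  assert (Mcomm : forall a b, E a -> E b -> meet a b = meet b a).
  { intros a b A B; apply eqlb; auto; intros p P.
    rewrite (Mchar a b p A B P), (Mchar b a p B A P); tauto. }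
  assert (Mdot : forall a b, E a -> E b -> meet a (dot a b) = meet a b).
  { intros a b A B. apply eqlb; auto. intros p P.
    rewrite (Gchar a a b p A (Hsub a A) eq_refl B P), (Mchar a b p A B P).
    split; intros [H1 H2]; split; auto.
    - rewrite <- H1 in H2. symmetry; exact H2.
    - rewrite <- H1. symmetry; exact H2. }
  assert (Mle : forall a b, E a -> E b -> a = mul a b -> meet a b = a).
  { intros a b A B Hab. apply eqlb; auto. intros p P.
    rewrite (Mchar a b p A B P). split; [tauto|]. intros Hp; split; auto.
    eapply trans; eauto. }
  assert (PF : forall e s f t g, E e -> mul e s = s -> d e = d s ->
             E f -> mul f t = t -> d f = d t -> g = meet e (dot s f) ->
             E g /\ g = mul g e /\ mul (mul g s) f = mul g s /\
             mul g (mul (mul g s) t) = mul (mul g s) t /\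
             d g = d (mul (mul g s) t) /\
             (forall p, E p -> (p = mul p g <-> p = mul p e /\ mul (mul p s) f = mul p s))).
  { intros e s f t g He Hes Hdes Hf Hft Hdft Eqg.
    assert (Eg : E g) by (rewrite Eqg; apply MEb; auto).
    assert (gc : forall p, E p -> (p = mul p g <-> p = mul p e /\ mul (mul p s) f = mul p s)).
    { intros p P; rewrite Eqg; apply Gchar; auto. }
    destruct (proj1 (gc g Eg) (eq_sym (Hsub g Eg))) as [Hge Hgsf].
    assert (Gd : mul g (d e) = g).
    { rewrite Hge at 1. rewrite <- Ha, (HEd e He). symmetry; exact Hge. }
    split; [exact Eg|]. split; [exact Hge|]. split; [exact Hgsf|].
    split; [|split; [|exact gc]].
    - rewrite Ha, Ha, (Hsub g Eg). reflexivity.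
    - symmetry. rewrite Hdd. rewrite <- Hdft. rewrite <- Hdd. rewrite Hgsf.
      rewrite Hdd. rewrite <- Hdes. rewrite Gd. reflexivity. }
  split.
  - unfold left_restriction_on.
    split; [| split; [| split; [| split; [| split; [| split]]]]].
    + intros [e s] [f t] [He [Hes Hdes]] [Hf [Hft Hdft]]. unfold Pmul, inC; simpl.
      destruct (PF e s f t _ He Hes Hdes Hf Hft Hdft eq_refl) as [A [B [C [D1 [D2 _]]]]].
      auto.
    + intros [e s] [He [Hes Hdes]]; unfold PD, inC; simpl.
      split; [auto|]. split; [apply Hsub; auto | reflexivity].
    + intros [e s] [f t] [k u] [He [Hes Hdes]] [Hf [Hft Hdft]] [Hk [Hku Hdku]]. cbn in *.
      unfold Pmul; simpl.
      remember (meet f (dot t k)) as g' eqn:Eqg'.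
      destruct (PF f t k u g' Hf Hft Hdft Hk Hku Hdku Eqg')
        as [Eg' [Hg'f [Hg'tk [Hg'1 [Hg'2 cg']]]]].
      remember (meet e (dot s f)) as g eqn:Eqg.
      destruct (PF e s f t g He Hes Hdes Hf Hft Hdft Eqg)
        as [Eg [Hge [Hgsf [Hg1 [Hg2 cg]]]]].
      remember (meet g (dot (mul (mul g s) t) k)) as h eqn:Eqh.
      destruct (PF g (mul (mul g s) t) k u h Eg Hg1 Hg2 Hk Hku Hdku Eqh)
        as [Eh [Hhg [_ [_ [_ ch]]]]].
      remember (meet e (dot s g')) as h' eqn:Eqh'.
      destruct (PF e s g' (mul (mul g' t) u) h' He Hes Hdes Eg' Hg'1 Hg'2 Eqh')
        as [Eh' [_ [_ [_ [_ ch']]]]].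
      assert (g'f : g' = mul g' f) by (rewrite Eqg'; apply mle1; auto).
      assert (g'tk : g' = mul g' (dot t k)) by (rewrite Eqg'; apply mle2; auto).
      assert (Hhh : h' = h).
      { apply eqlb; auto. intros p P. rewrite (ch' p P), (ch p P), (cg p P).
        split.
        - intros [H1 H2].
          assert (pf := absorb (mul p s) g' f H2 g'f).
          assert (pd := absorb (mul p s) g' (dot t k) H2 g'tk).
          destruct (proj1 (Dchar t k (mul p s) Hk) (eq_sym pd)) as [dk _].
          assert (Hpg := proj2 (cg p P) (conj H1 pf)).
          assert (E1 : mul p (mul (mul g s) t) = mul (mul p s) t)
            by (rewrite Ha, Ha, <- Hpg; reflexivity).
          split; [split; auto|]. rewrite E1; exact dk.
        - intros [[H1 H2] H3]. split; auto.
          assert (Hpg := proj2 (cg p P) (conj H1 H2)).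
          assert (E1 : mul p (mul (mul g s) t) = mul (mul p s) t)
            by (rewrite Ha, Ha, <- Hpg; reflexivity).
          rewrite E1 in H3.
          assert (B : mul (mul p s) (d t) = mul p s).
          { rewrite <- Hdft. apply (absorb _ f); auto. symmetry; apply HEd; auto. }
          assert (Hdt : mul (mul p s) (dot t k) = mul p s).
          { symmetry. apply (proj2 (Dchar t k (mul p s) Hk)); auto. }
          rewrite Eqg'. apply HI2; auto. }
      assert (X := proj1 (ch' h Eh)). rewrite Hhh in X.
      destruct (X (eq_sym (Hsub h Eh))) as [_ Hhsg'].
      destruct (proj1 (ch h Eh) (eq_sym (Hsub h Eh))) as [Hhg2 _].
      rewrite Hhh. f_equal. repeat rewrite Ha. rewrite Hhsg', <- Hhg2. reflexivity.
    + intros [e s] [He [Hes Hdes]]. unfold Pmul, PD in *; cbn in *.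
      rewrite (Mdot e e He He). rewrite (Mle e e He He (eq_sym (Hsub e He))).
      rewrite (Hsub e He), Hes. reflexivity.
    + intros [e s] [f t] [He [Hes Hdes]] [Hf [Hft Hdft]]. unfold Pmul, PD in *; cbn in *.
      rewrite (Mdot e f He Hf), (Mdot f e Hf He), (Mcomm f e Hf He).
      repeat first [rewrite <- (mle1 e f He Hf) | rewrite <- (mle2 e f He Hf)].
      reflexivity.
    + intros [e s] [f t] [He [Hes Hdes]] [Hf [Hft Hdft]]. unfold Pmul, PD in *; cbn in *.
      rewrite (Mdot e f He Hf).
      repeat first [rewrite <- (mle1 e f He Hf) | rewrite <- (mle2 e f He Hf)].
      reflexivity.
    + intros [e s] [f t] [He [Hes Hdes]] [Hf [Hft Hdft]]. unfold Pmul, PD in *; cbn in *.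
      destruct (PF e s f t _ He Hes Hdes Hf Hft Hdft eq_refl)
        as [Eg [Hge [Hgsf _]]].
      rewrite (Mdot _ e Eg He). rewrite (Mle _ e Eg He Hge).
      rewrite (Hsub _ Eg). rewrite Hgsf. reflexivity.
  - intros e s f t [He [Hes Hdes]] [Hf [Hft Hdft]].
    unfold nat_le, Pmul, PD in *; cbn in *. rewrite (Mdot e f He Hf). unfold le_r. split.
    + intros Heq. injection Heq as H1 H2. split.
      * pose proof (mle2 e f He Hf) as X. rewrite <- H1 in X. exact X.
      * rewrite <- H1 in H2. rewrite (Hsub e He) in H2. exact H2.
    + intros [H1 H2]. rewrite (Mle e f He Hf H1), (Hsub e He), <- H2. reflexivity.
Qed.
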